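(* Let $B>1$, $0<\delta<\frac{1}{1+B}$ and $T>0$. For every $t\ge\delta^{-1}T$ there is a finite sequence $s_1,\dots,s_N$ of reals such that $t=s_1+\cdots+s_N$, $s_1=Bs_2$, $s_i=(1+\delta)s_{i+1}$ for $2\le i\le N-1$, and $T\le s_N\le2T$. *)

(* Defs.v *)
From Stdlib Require Export Reals.
Open Scope R_scope.

Definition sum_1_to (s : nat -> R) (N : nat) : R :=
  match N with
  | O => 0
  | S n => sum_f_R0 (fun i => s (S i)) n
  end.

(* Main.v *)
Require Import Defs.
From Stdlib Require Import Reals.
From Stdlib Require Import Lra Lia Psatz ZArith.
Open Scope R_scope.

Definition GG (q : R) (k : nat) := sum_f_R0 (fun i => q ^ (k - i)) k.

Lemma GG_S q k : GG q (S k) = q * GG q k + 1.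
Proof.
  unfold GG. simpl sum_f_R0 at 1. rewrite Nat.sub_diag. simpl pow.
  rewrite scal_sum.
  rewrite (sum_eq (fun i => q ^ (S k - i)) (fun i => q ^ (k - i) * q)); [ring|].
  intros i Hi. rewrite Nat.sub_succ_l by lia. simpl. ring.
Qed.

Theorem lemma6p2 (B delta T : R) (hB : 1 < B) (hd0 : 0 < delta)
  (hd1 : delta < 1 / (1 + B)) (hT : 0 < T) (t : R) (ht : T / delta <= t) :
  exists (N : nat) (s : nat -> R),
    (2 <= N)%nat /\
    t = sum_1_to s N /\
    s 1%nat = B * s 2%nat /\
    (forall i : nat, (2 <= i)%nat -> (i <= N - 1)%nat -> s i = (1 + delta) * s (S i)) /\
    T <= s N /\ s N <= 2 * T.
Proof.
  set (q := 1 + delta).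
  set (f := fun k => B * q ^ k + GG q k).
  assert (hf0 : f 0%nat = 1 + B) by (unfold f, GG; simpl; ring).
  assert (hfS : forall k, f (S k) = q * f k + 1).
  { intro k. unfold f. rewrite GG_S. simpl. ring. }
  assert (hdB : delta * (1 + B) < 1).
  { apply (Rmult_lt_compat_r (1+B)) in hd1; [|lra].
    unfold Rdiv in hd1. rewrite Rmult_1_l, Rinv_l in hd1; lra. }
  assert (hfge : forall k, 1 + B + INR k <= f k).
  { induction k. simpl. lra. rewrite hfS, S_INR.
    assert (0 < f k) by (pose proof (pos_INR k); lra).
    unfold q. nra. }
  assert (htT : 1 + B < t / T).
  { apply (Rmult_lt_reg_r T); [lra|]. unfold Rdiv. rewrite Rmult_assoc, Rinv_l, Rmult_1_r by lra.
    assert (T / delta <= t) by exact ht.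
    assert (T <= t * delta).
    { apply (Rmult_le_compat_r delta) in ht; [|lra]. unfold Rdiv in ht.
      rewrite Rmult_assoc, Rinv_l, Rmult_1_r in ht; lra. }
    nra. }
  assert (Hex : exists k, f k <= t / T < f (S k)).
  { destruct (archimed (t / T)) as [Hup _].
    assert (Hn : exists n, t / T < f n).
    { exists (Z.to_nat (up (t / T))).
      pose proof (hfge (Z.to_nat (up (t/T)))).
      rewrite INR_IZR_INZ, Z2Nat.id in H.
      - lra.
      - apply le_IZR. lra. }
    destruct Hn as [n Hn]. induction n.
    - lra.
    - destruct (Rle_lt_dec (f n) (t / T)) as [h|h].
      + exists n; lra.
      + apply IHn; exact h. }
  destruct Hex as [k [Hk1 Hk2]].
  assert (hfk : 1 + B <= f k) by (pose proof (hfge k); pose proof (pos_INR k); lra).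
  set (x := t / f k).
  assert (hx : x * f k = t) by (unfold x; field; lra).
  exists (S (S k)), (fun i => if Nat.eqb i 1 then B * q ^ k * x else q ^ (S (S k) - i) * x).
  split; [lia|]. split.
  { unfold sum_1_to. rewrite decomp_sum by lia. simpl pred. simpl Nat.eqb.
    rewrite (sum_eq _ (fun i => q ^ (k - i) * x)).
    2:{ intros i Hi. simpl. reflexivity. }
    rewrite <- scal_sum. rewrite <- hx. unfold f, GG. ring. }
  split.
  { simpl Nat.eqb. cbv iota. replace (S (S k) - 2)%nat with k by lia. ring. }
  split.
  { intros i Hi1 Hi2. destruct (Nat.eqb_spec i 1) as [e|e]; [lia|].
    simpl Nat.eqb. replace (S (S k) - i)%nat with (S (S (S k) - S i)) by lia.
    destruct i as [|i]; [lia|]. destruct i as [|i]; [lia|]. simpl Nat.eqb. cbv iota. simpl pow. unfold q. ring. }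
  rewrite Nat.sub_diag. simpl Nat.eqb. cbv iota. simpl pow. rewrite Rmult_1_l.
  split.
  - unfold x. apply (Rmult_le_reg_r (f k)); [lra|]. unfold Rdiv.
    rewrite Rmult_assoc, Rinv_l, Rmult_1_r by lra.
    apply (Rmult_le_compat_r T) in Hk1; [|lra]. unfold Rdiv in Hk1.
    rewrite Rmult_assoc, Rinv_l, Rmult_1_r in Hk1; lra.
  - unfold x. apply (Rmult_le_reg_r (f k)); [lra|]. unfold Rdiv.
    rewrite Rmult_assoc, Rinv_l, Rmult_1_r by lra.
    rewrite hfS in Hk2.
    assert (q * f k + 1 <= 2 * f k) by (unfold q; nra).
    assert (t / T < 2 * f k) by lra.
    apply (Rmult_lt_compat_r T) in H0; [|lra]. unfold Rdiv in H0.
    rewrite Rmult_assoc, Rinv_l, Rmult_1_r in H0; lra.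
Qed.
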